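(* Let $(\mathcal V,\mathcal W,\lambda)$ be a FTvN system, let $E$ be a spectral set in $\mathcal V$, $d\in\mathcal V$ and $\alpha\in\mathbb R$. Then the following are equivalent: (i) $\alpha\ge\langle d,z\rangle$ for all $z\in E$; (ii) $\alpha\ge\langle d,z\rangle$ for all $z\in\overline{\operatorname{conv}(E)}$; (iii) $\alpha\ge\langle\lambda(d),\lambda(z)\rangle$ for all $z\in E$; (iv) $\alpha\ge\langle\lambda(d),\lambda(z)\rangle$ for all $z\in\overline{\operatorname{conv}(E)}$.
   Context: A Fan-Theobald-von Neumann (FTvN) system is a triple $(\mathcal V,\mathcal W,\lambda)$ where $\mathcal V,\mathcal W$ are real inner product spaces and $\lambda:\mathcal V\to\mathcal W$ is a map such that: (A1) $\|\lambda(x)\|=\|x\|$ for all $x\in\mathcal V$; (A2) $\langle x,y\rangle\le\langle\lambda(x),\lambda(y)\rangle$ for all $x,y\in\mathcal V$; (A3) for every $c\in\mathcal V$ and $q\in\lambda(\mathcal V)$ there exists $x\in\mathcal V$ with $\lambda(x)=q$ and $\langle c,x\rangle=\langle\lambda(c),\lambda(x)\rangle$. The $\lambda$-orbit of $u$ is $[u]=\{x\in\mathcal V:\lambda(x)=\lambda(u)\}$. A set $E\subseteq\mathcal V$ is spectral if $E=\lambda^{-1}(Q)$ for some $Q\subseteq\mathcal W$, equivalently $x\in E\Rightarrow[x]\subseteq E$. $\overline{S}$ denotes closure and $\operatorname{conv}$ convex hull. *)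

(* Defs.v *)
From mathcomp Require Import all_boot all_order all_algebra.
From mathcomp Require Import reals.
Set Implicit Arguments. Unset Strict Implicit. Unset Printing Implicit Defensive.
Import Order.TTheory GRing.Theory Num.Theory.
Local Open Scope ring_scope.

Definition is_inner_product (R : realType) (V : lmodType R) (ip : V -> V -> R) : Prop :=
  [/\ (forall x y, ip x y = ip y x),
      (forall a x y z, ip (a *: x + y) z = a * ip x z + ip y z),
      (forall x, 0 <= ip x x) &
      (forall x, ip x x = 0 -> x = 0)].

Definition ipnorm (R : realType) (V : lmodType R) (ip : V -> V -> R) (x : V) : R :=
  Num.sqrt (ip x x).

Definition FTvN_system (R : realType) (V W : lmodType R)
  (ipV : V -> V -> R) (ipW : W -> W -> R) (lam : V -> W) : Prop :=
  [/\ is_inner_product ipV, is_inner_product ipW,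
      (forall x, ipnorm ipW (lam x) = ipnorm ipV x),
      (* (A2) *) (forall x y, ipV x y <= ipW (lam x) (lam y)) &
      (* (A3) *) (forall (c : V) (q : W), (exists u, lam u = q) ->
                    exists x, lam x = q /\ ipV c x = ipW (lam c) (lam x))].

Definition spectral (R : realType) (V W : lmodType R) (lam : V -> W) (E : V -> Prop) : Prop :=
  exists Q : W -> Prop, forall x, E x <-> Q (lam x).

Definition conv_hull (R : realType) (V : lmodType R) (E : V -> Prop) (z : V) : Prop :=
  exists (n : nat) (w : 'I_n -> R) (p : 'I_n -> V),
    [/\ (forall i, E (p i)), (forall i, 0 <= w i),
        \sum_(i < n) w i = 1 & z = \sum_(i < n) w i *: p i].

Definition ipclosure (R : realType) (V : lmodType R) (ip : V -> V -> R)
  (S : V -> Prop) (z : V) : Prop :=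
  forall e : R, 0 < e -> exists s, S s /\ ipnorm ip (z - s) < e.

(* Main.v *)
Require Import Defs.
From mathcomp Require Import all_boot all_order all_algebra.
From mathcomp Require Import reals.
From mathcomp Require Import lra.
Import Order.TTheory GRing.Theory Num.Theory.
Local Open Scope ring_scope.

Section Helpers.
Variables (R : realType) (V : lmodType R) (ip : V -> V -> R).
Hypothesis hip : is_inner_product ip.

Lemma ipC x y : ip x y = ip y x.
Proof. by case: hip. Qed.

Lemma ipL a x y z : ip (a *: x + y) z = a * ip x z + ip y z.
Proof. by case: hip. Qed.

Lemma ip0l z : ip 0 z = 0.
Proof.
have := ipL 1 0 0 z; rewrite scaler0 addr0 mul1r => h.
by apply: (addrI (ip 0 z)); rewrite addr0 -h.
Qed.

Lemma ipDl x y z : ip (x + y) z = ip x z + ip y z.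
Proof. by rewrite -[x]scale1r ipL mul1r scale1r. Qed.

Lemma ipZl a x z : ip (a *: x) z = a * ip x z.
Proof. by rewrite -[a *: x]addr0 ipL ip0l addr0. Qed.

Lemma ipNl x z : ip (- x) z = - ip x z.
Proof. by rewrite -scaleN1r ipZl mulN1r. Qed.

Lemma ipBl x y z : ip (x - y) z = ip x z - ip y z.
Proof. by rewrite ipDl ipNl. Qed.

Lemma ipBr x y z : ip z (x - y) = ip z x - ip z y.
Proof. by rewrite ipC ipBl (ipC x) (ipC y). Qed.

Lemma ipZr a x z : ip z (a *: x) = a * ip z x.
Proof. by rewrite ipC ipZl ipC. Qed.

Lemma ip_sum n (w : 'I_n -> R) (p : 'I_n -> V) c :
  ip (\sum_(i < n) w i *: p i) c = \sum_(i < n) w i * ip (p i) c.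
Proof.
elim/big_rec2: _ => [|i y1 y2 _ <-]; first exact: ip0l.
by rewrite ipL.
Qed.

Lemma conv_le (E : V -> Prop) d alpha :
  (forall z, E z -> ip d z <= alpha) ->
  forall z, conv_hull E z -> ip d z <= alpha.
Proof.
move=> hE z [n [w [p [hp hw hs ->]]]].
rewrite ipC ip_sum.
apply: (@le_trans _ _ (\sum_(i < n) w i * alpha)).
  by apply: ler_sum => i _; apply: ler_wpM2l => //; rewrite ipC; apply: hE.
by rewrite -mulr_suml hs mul1r.
Qed.

Lemma clos_le (S : V -> Prop) d alpha :
  (forall z, S z -> ip d z <= alpha) ->
  forall z, ipclosure ip S z -> ip d z <= alpha.
Proof.
move=> hS z hz.
rewrite leNgt; apply/negP => hlt.
set A := ip d d.
have hA : 0 <= A by case: hip => _ _ + _; apply.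
set e := (ip d z - alpha) / (A + 1).
have hA1 : 0 < A + 1 by lra.
have he : 0 < e by apply: divr_gt0; lra.
have heA : e * (A + 1) = ip d z - alpha by rewrite /e mulfVK //; lra.
have [s [Ss hs]] := hz e he.
set u := z - s in hs *.
have hB : ip d z = ip d s + ip d u by rewrite /u ipBr; lra.
clearbody u.
have hsq : 0 <= Num.sqrt (ip u u) := sqrtr_ge0 _.
have huu : 0 <= ip u u by case: hip => _ _ + _; apply.
have hC : ip u u < e * e.
  rewrite -[ip u u]sqr_sqrtr // expr2.
  rewrite /ipnorm in hs; nra.
have h0 : 0 <= ip (e *: d - u) (e *: d - u) by case: hip => _ _ + _; apply.
rewrite !ipBl !ipBr !ipZl !ipZr -/A (ipC u d) in h0.
have hds := hS s Ss.
set B := ip d u in h0 hB.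
have h2 : e * (2 * B) < e * (e * (A + 1)) by nra.
rewrite ltr_pM2l // in h2.
lra.
Qed.

Lemma sub_clos_conv (E : V -> Prop) z : E z -> ipclosure ip (conv_hull E) z.
Proof.
move=> Ez e he; exists z; split.
  exists 1%N, (fun _ => 1), (fun _ => z); split => //.
  - by rewrite big_ord1.
  - by rewrite big_ord1 scale1r.
by rewrite /ipnorm subrr ip0l sqrtr0.
Qed.
End Helpers.
Theorem theorem5p3 (R : realType) (V W : lmodType R)
  (ipV : V -> V -> R) (ipW : W -> W -> R) (lam : V -> W)
  (hsys : FTvN_system ipV ipW lam)
  (E : V -> Prop) (hE : spectral lam E) (d : V) (alpha : R) :
  [<-> (forall z, E z -> ipV d z <= alpha);
       (forall z, ipclosure ipV (conv_hull E) z -> ipV d z <= alpha);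
       (forall z, E z -> ipW (lam d) (lam z) <= alpha);
       (forall z, ipclosure ipV (conv_hull E) z -> ipW (lam d) (lam z) <= alpha)].
Proof.
case: hsys => hV hW A1 A2 A3.
case: hE => Q hQ.
have i_iii : forall d', (forall z, E z -> ipV d' z <= alpha) ->
    forall z, E z -> ipW (lam d') (lam z) <= alpha.
  move=> d' h z Ez.
  have [x [hx hx']] := A3 d' (lam z) (ex_intro _ z erefl).
  rewrite -hx -hx'; apply: h; apply/hQ; rewrite hx; exact/hQ.
have iii_i : forall d', (forall z, E z -> ipW (lam d') (lam z) <= alpha) ->
    forall z, E z -> ipV d' z <= alpha.
  by move=> d' h z Ez; apply: le_trans (A2 _ _) (h _ Ez).
tfae.
- by move=> h; apply: clos_le => //; apply: conv_le.
- by move=> h; apply: i_iii => z Ez; apply: h; apply: sub_clos_conv.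
- move=> h z hz.
  have [x [hx hx']] := A3 z (lam d) (ex_intro _ d erefl).
  rewrite -hx (ipC _ _ _ hW) -hx' (ipC _ _ _ hV).
  apply: (@clos_le _ _ _ hV _ _ _ _ _ hz); apply: (@conv_le _ _ _ hV).
  by apply: iii_i; rewrite hx.
- move=> h; apply: iii_i => z Ez; apply: h; exact: sub_clos_conv.
Qed.
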